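(* Let $n$ be even, $F\colon\mathbb F_2^n\to\mathbb F_2^n$ a quadratic APN function, and $\mathcal V_F=\{V_b\colon b\in\mathbb F_2^n\setminus\{0\},\ \dim(V_b)\ge 1\}$. Then for every $b\in\mathbb F_2^n\setminus\{0\}$ the component $F_b$ has amplitude $2^{\frac{n+\dim(V_b)}{2}}$. In particular, if $F$ has amplitude distribution $[0^{k_0},2^{k_2},\dots,(n-2)^{k_{n-2}},n^{k_n}]$, then $\mathcal V_F$ is a vector space partition of $\mathbb F_2^n$ of type $[2^{k_2},\dots,(n-2)^{k_{n-2}},n^{k_n}]$.
   Context: $\langle\cdot,\cdot\rangle$ is the standard dot product. $F$ is APN if for every $a\neq0$ and every $c$, $F(x)+F(x+a)=c$ has at most 2 solutions; $F$ is quadratic if each component $F_b(x)=\langle b,F(x)\rangle$ is a quadratic form plus an affine function. Walsh transform: $W_F(b,a)=\sum_{x\in\mathbb F_2^n}(-1)^{F_b(x)+\langle x,a\rangle}$. For quadratic $F$ and fixed $b$ there is $0\le k\le n$ with $|W_F(b,a)|\in\{0,2^{(n+k)/2}\}$ for all $a$ (the nonzero value attained); $2^{(n+k)/2}$ is the amplitude of $F_b$. The amplitude distribution $[0^{k_0},1^{k_1},\dots,n^{k_n}]$ records that exactly $k_i$ nonzero $b$ give amplitude $2^{(n+i)/2}$. With $D_{F,a}(x)=F(x)+F(x+a)$, $H_b=\{x:\langle b,x\rangle=0\}$, $\overline{H_b}=\{x:\langle b,x\rangle=1\}$: $T_b=\{a:\mathrm{Im}(D_{F,a})=H_b\}\cup\{0\}$,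 $\overline{T_b}=\{a:\mathrm{Im}(D_{F,a})=\overline{H_b}\}$, $V_b=T_b\cup\overline{T_b}$ (a subspace). A vector space partition of $\mathbb F_2^n$ is a set of nonzero subspaces such that each nonzero vector lies in exactly one of them; it has type $[d_1^{n_1},\dots,d_k^{n_k}]$ ($d_1<\dots<d_k$) if it contains exactly $n_i$ subspaces of dimension $d_i$. *)

(* Defs.v *)
From HB Require Import structures.
From mathcomp Require Import all_boot all_order all_algebra.
Set Implicit Arguments. Unset Strict Implicit. Unset Printing Implicit Defensive.
Import GRing.Theory Num.Theory.
Local Open Scope ring_scope.

Notation vec n := 'rV['F_2]_n.

Definition dot n (u v : vec n) : 'F_2 := \sum_(i < n) u ord0 i * v ord0 i.

Definition sgn (t : 'F_2) : int := (-1) ^+ (nat_of_ord t).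

Definition quadratic n (F : vec n -> vec n) : Prop :=
  forall b : vec n, exists (Q : 'M['F_2]_n) (l : vec n) (c : 'F_2),
    forall x : vec n,
      dot b (F x) = \sum_(i < n) \sum_(j < n) Q i j * x ord0 i * x ord0 j + dot l x + c.

Definition APN n (F : vec n -> vec n) : Prop :=
  forall a : vec n, a != 0 -> forall c : vec n,
    (#|[set x : vec n | (F x + F (x + a))%R == c]| <= 2)%N.

Definition walsh n (F : vec n -> vec n) (b a : vec n) : int :=
  \sum_(x : vec n) sgn (dot b (F x) + dot x a).

(* F_b has amplitude 2^((n+k)/2): |W_F(b,a)| in {0, 2^((n+k)/2)} for all a,
   the nonzero value being attained (stated with squares to stay in int). *)
Definition has_amplitude n (F : vec n -> vec n) (b : vec n) (k : nat) : bool :=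
  [forall a : vec n, (walsh F b a == 0) || (walsh F b a ^+ 2 == 2 ^+ (n + k))] &&
  [exists a : vec n, walsh F b a ^+ 2 == 2 ^+ (n + k)].

Definition deriv n (F : vec n -> vec n) (a x : vec n) : vec n := F x + F (x + a).
Definition imD n (F : vec n -> vec n) (a : vec n) : {set vec n} :=
  [set deriv F a x | x : vec n].

Definition Hb n (b : vec n) : {set vec n} := [set x : vec n | dot b x == 0].
Definition Hbbar n (b : vec n) : {set vec n} := [set x : vec n | dot b x == 1].

Definition Tb n (F : vec n -> vec n) (b : vec n) : {set vec n} :=
  [set a : vec n | imD F a == Hb b] :|: [set 0].
Definition Tbbar n (F : vec n -> vec n) (b : vec n) : {set vec n} :=
  [set a : vec n | imD F a == Hbbar b].
Definition Vb n (F : vec n -> vec n) (b : vec n) : {set vec n} :=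
  Tb F b :|: Tbbar F b.

Definition dimS n (U : {set vec n}) : nat := \dim <<enum U>>%VS.

Definition is_subspace n (U : {set vec n}) : Prop :=
  0 \in U /\ (forall x y, x \in U -> y \in U -> x + y \in U).

Definition vs_partition n (P : {set {set vec n}}) : Prop :=
  (forall U, U \in P -> is_subspace U /\ U != [set 0]) /\
  (forall x : vec n, x != 0 -> exists! U, U \in P /\ x \in U).

Definition VF n (F : vec n -> vec n) : {set {set vec n}} :=
  [set Vb F b | b in [set b : vec n | (b != 0) && (1 <= dimS (Vb F b))%N]].

(* Main.v *)
Require Import Defs.
From HB Require Import structures.
From mathcomp Require Import all_boot all_order all_algebra all_field ring zify.
Import GRing.Theory Num.Theory.
Local Open Scope ring_scope.

Lemma F2cases (t : 'F_2) : t = 0 \/ t = 1.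
Proof. case: t => [[|[|k]] Hk]; [left|right|by []]; exact: val_inj. Qed.
Lemma F2two : (2 : 'F_2) = 0. Proof. exact: val_inj. Qed.
Lemma F2dbl (t : 'F_2) : t + t = 0.
Proof. case: (F2cases t) => ->; [exact: addr0 | exact: F2two]. Qed.
Lemma F2neq0 (t : 'F_2) : t != 0 -> t = 1.
Proof. by case: (F2cases t) => -> //; rewrite eqxx. Qed.
Lemma sgnD s t : sgn (s + t) = sgn s * sgn t.
Proof. by case: (F2cases s) => ->; case: (F2cases t) => ->. Qed.
Lemma sgn0 : sgn 0 = 1. Proof. by []. Qed.
Lemma sgn1 : sgn 1 = -1. Proof. by []. Qed.

Ltac genF2 := repeat match goal with |- context [@fun_of_matrix ?R ?m ?k ?M ?a ?i] => generalize (@fun_of_matrix R m k M a i) end.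
Ltac f2 := repeat match goal with |- forall t : 'F_2, _ => let h := fresh in move=> h; case: (F2cases h) => -> end; first [by [] | exact: val_inj].
Ltac cf2 := repeat match goal with |- context [@fun_of_matrix ?R ?m ?k ?M ?a ?i] => case: (F2cases (@fun_of_matrix R m k M a i)) => -> end; exact: val_inj.
Ltac vf2 := apply/rowP => ?; rewrite !mxE; cf2.

Lemma PoszX2 m : ((2 ^ m)%N)%:Z = 2 ^+ m.
Proof. by rewrite -natz natrX. Qed.

Section S.
Variable n : nat.
Implicit Types (u v w b : vec n).

Lemma dotDr b u v : dot b (u + v) = dot b u + dot b v.
Proof. by rewrite /dot -big_split; apply: eq_bigr => i _; rewrite mxE mulrDr. Qed.
Lemma dotDl b u v : dot (u + v) b = dot u b + dot v b.
Proof. by rewrite /dot -big_split; apply: eq_bigr => i _; rewrite mxE mulrDl. Qed.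
Lemma dot0r b : dot b 0 = 0.
Proof. by rewrite /dot big1 // => i _; rewrite mxE mulr0. Qed.
Lemma dot0l b : dot 0 b = 0.
Proof. by rewrite /dot big1 // => i _; rewrite mxE mul0r. Qed.
Lemma dotC u v : dot u v = dot v u.
Proof. by apply: eq_bigr => i _; rewrite mulrC. Qed.
Lemma dot_delta i v : dot (delta_mx 0 i) v = v 0 i.
Proof.
rewrite /dot (bigD1 i) //= big1 ?addr0 => [|j ji]; first by rewrite mxE !eqxx mul1r.
by rewrite mxE eqxx (negbTE ji) mul0r.
Qed.
Lemma dot_eq0 v : (forall b, dot b v = 0) -> v = 0.
Proof. by move=> H; apply/rowP => i; rewrite -dot_delta H mxE. Qed.
Lemma dot_mx u v : dot u v = (v *m u^T) 0 0.
Proof. by rewrite mxE; apply: eq_bigr => i _; rewrite mxE mulrC. Qed.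
Lemma card_vec : #|{: vec n}| = (2 ^ n)%N.
Proof. by rewrite card_mx card_Fp // mul1n. Qed.
Lemma dot_neq0 b : b != 0 -> exists e, dot b e = 1.
Proof.
move=> bn0; have /existsP [i bi]: [exists i, b 0 i != 0].
  apply: contraR bn0 => /existsPn H; apply/eqP/rowP => i.
  by rewrite mxE; apply/eqP; move: (H i); rewrite negbK.
by exists (delta_mx 0 i); rewrite dotC dot_delta; exact: F2neq0.
Qed.

(* the 8-term third derivative *)
Definition T3 (g : vec n -> 'F_2) x y z :=
  g (x + y + z) + g (x + y) + g (x + z) + g (y + z) + g x + g y + g z + g 0.

Lemma T3_ext g g' x y z : g =1 g' -> T3 g x y z = T3 g' x y z.
Proof. by move=> e; rewrite /T3 !e. Qed.
Lemma T3_add g h x y z : T3 (fun w => g w + h w) x y z = T3 g x y z + T3 h x y z.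
Proof. rewrite /T3; ring. Qed.
Lemma T3_sum (G : 'I_n -> vec n -> 'F_2) x y z :
  T3 (fun w => \sum_i G i w) x y z = \sum_i T3 (G i) x y z.
Proof. by rewrite /T3 -!big_split. Qed.
Lemma T3_const c x y z : T3 (fun=> c) x y z = 0.
Proof. rewrite /T3; have -> : c+c+c+c+c+c+c+c = 2 * (4 * c) by ring. by rewrite F2two mul0r. Qed.
Lemma T3_lin a i x y z : T3 (fun w => a * w 0 i) x y z = 0.
Proof.
rewrite /T3 !mxE.
transitivity (2 * (2 * a * (x 0 i + y 0 i + z 0 i))); first ring.
by rewrite F2two mul0r.
Qed.
Lemma T3_quad2 q i j x y z : T3 (fun w => q * w 0 i * w 0 j) x y z = 0.
Proof.
rewrite /T3 !mxE.
transitivity (2 * (q * (2 * (x 0 i * x 0 j + y 0 i * y 0 j + z 0 i * z 0 j) +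
  (x 0 i * y 0 j + y 0 i * x 0 j + x 0 i * z 0 j + z 0 i * x 0 j + y 0 i * z 0 j + z 0 i * y 0 j)))); first ring.
by rewrite F2two mul0r.
Qed.
Lemma T3_quad (Q : 'M['F_2]_n) (l : vec n) (c : 'F_2) g x y z :
  (forall w, g w = \sum_(i < n) \sum_(j < n) Q i j * w 0 i * w 0 j + dot l w + c) ->
  T3 g x y z = 0.
Proof.
move=> E.
have -> : T3 g x y z = T3 (fun w => \sum_(i < n) \sum_(j < n) Q i j * w 0 i * w 0 j + dot l w + c) x y z.
  exact: T3_ext.
rewrite !T3_add T3_const addr0.
rewrite (T3_sum (fun i w => \sum_(j < n) Q i j * w 0 i * w 0 j)).
rewrite (T3_ext (dot l) (fun w => \sum_i l 0 i * w 0 i)) // (T3_sum (fun i w => l 0 i * w 0 i)).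
rewrite [X in _ + X]big1 ?addr0 => [|i _]; last exact: T3_lin.
apply: big1 => i _; rewrite (T3_sum (fun j w => Q i j * w 0 i * w 0 j)).
by apply: big1 => j _; apply: T3_quad2.
Qed.

Lemma vaddK u v : u + v + v = u.
Proof. by move: u v => *; vf2. Qed.

Lemma sum_sgn_sub (S : {set vec n}) (mu : vec n -> 'F_2) :
  (forall u v, u \in S -> v \in S -> u + v \in S) ->
  (forall u v, u \in S -> v \in S -> mu (u + v) = mu u + mu v) ->
  \sum_(u in S) sgn (mu u) = if [forall u in S, mu u == 0] then (#|S|)%:Z else 0.
Proof.
move=> Sadd muadd; case: ifP => [/forall_inP H | /negbT /forall_inPn [u0 u0S mu0]].
  rewrite (eq_bigr (fun _ => 1)) => [|u uS]; last by rewrite (eqP (H u uS)).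
  by rewrite sumr_const natz.
have mu1 := F2neq0 _ mu0.
set X := \sum_(u in S) _.
have : X = - X.
  have memS u : (u + u0 \in S) = (u \in S).
    apply/idP/idP => [h|h]; last exact: Sadd.
    by rewrite -(vaddK u u0); exact: Sadd.
  rewrite {1}/X (reindex_inj (addIr u0)) /= -sumrN.
  apply: eq_big => [u|u]; first exact: memS.
  by rewrite memS => uS; rewrite muadd // mu1 sgnD sgn1 mulrN1.
move=> h; lia.
Qed.

Lemma sum_sgn_all (mu : vec n -> 'F_2) : (forall u v, mu (u + v) = mu u + mu v) ->
  \sum_(u : vec n) sgn (mu u) = if [forall u, mu u == 0] then ((2 ^ n)%N)%:Z else 0.
Proof.
move=> h.
have := sum_sgn_sub [set: vec n] mu (fun u v _ _ => in_setT (u + v)) (fun u v _ _ => h u v).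
rewrite cardsT card_vec (eq_bigl (fun _ => true)) => [->|u]; last by rewrite in_setT.
congr (if _ then _ else _); apply/forall_inP/forallP => H u //.
  by apply: H; rewrite in_setT.
Qed.

Lemma card_subspace (S : {set vec n}) : 0 \in S ->
  (forall u v, u \in S -> v \in S -> u + v \in S) -> #|S| = (2 ^ dimS S)%N.
Proof.
move=> S0 Sadd; rewrite /dimS.
have memU v : (v \in <<enum S>>%VS) = (v \in S).
  apply/idP/idP => [/coord_span -> | vS]; last by apply: memv_span; rewrite mem_enum.
  apply: (big_ind (fun w => w \in S)) => // i _.
  case: (F2cases (coord (enum_tuple S) i v)) => ->; first by rewrite scale0r.
  by rewrite scale1r -mem_enum mem_nth // -cardE ltn_ord.
rewrite -(eq_card memU) card_vspace card_Fp //.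
Qed.

Variable F : vec n -> vec n.
Hypothesis Fq : quadratic F.

Lemma Q3 x y z : F (x + y + z) + F (x + y) + F (x + z) + F (y + z) + F x + F y + F z + F 0 = 0.
Proof.
apply: dot_eq0 => b; rewrite !dotDr; have [Q [l [c E]]] := Fq b.
by have := T3_quad Q l c _ x y z E; rewrite /T3.
Qed.

Lemma Q3' x y z : F (x + y + z) = F (x + y) + F (x + z) + F (y + z) + F x + F y + F z + F 0.
Proof.
have := Q3 x y z; move: (F (x + y + z)) => A.
move: (F (x + y)) (F (x + z)) (F (y + z)) (F x) (F y) (F z) (F 0) => B C D E G H I e.
by apply/eqP; rewrite -subr_eq0 -e; apply/eqP; vf2.
Qed.

Definition Lm a y := Defs.deriv F a y + Defs.deriv F a 0.

Lemma Lm_add a y z : Lm a (y + z) = Lm a y + Lm a z.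
Proof.
rewrite /Lm /Defs.deriv add0r Q3'.
by move: (F (y + z)) (F (y + a)) (F (z + a)) (F y) (F z) (F a) (F 0) => *; vf2.
Qed.

Definition Rad b : {set vec n} :=
  [set a | [forall x, dot b (Defs.deriv F a x) == dot b (Defs.deriv F a 0)]].

Lemma walsh_sq b a : walsh F b a ^+ 2 =
  ((2 ^ n)%N)%:Z * \sum_(u in Rad b) sgn (dot b (Defs.deriv F u 0) + dot u a).
Proof.
rewrite expr2 /walsh mulr_suml.
transitivity (\sum_(x : vec n) \sum_(u : vec n) sgn (dot b (Defs.deriv F u x) + dot u a)).
  apply: eq_bigr => x _; rewrite mulr_sumr (reindex_inj (addrI x)) /=.
  apply: eq_bigr => u _; rewrite -sgnD /Defs.deriv dotDr dotDl; congr sgn.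
  by move: (dot b (F x)) (dot b (F (x + u))) (dot x a) (dot u a); f2.
rewrite exchange_big /= mulr_sumr [RHS]big_mkcond /=; apply: eq_bigr => u _.
transitivity (sgn (dot b (Defs.deriv F u 0) + dot u a) * \sum_(x : vec n) sgn (dot b (Lm u x))).
  rewrite mulr_sumr; apply: eq_bigr => x _; rewrite -sgnD /Lm dotDr; congr sgn.
  by move: (dot b (Defs.deriv F u x)) (dot b (Defs.deriv F u 0)) (dot u a); f2.
rewrite sum_sgn_all => [|y z]; last by rewrite Lm_add dotDr.
have -> : [forall x, dot b (Lm u x) == 0] = (u \in Rad b).
  rewrite inE; apply: eq_forallb => x; rewrite /Lm dotDr.
  by move: (dot b (Defs.deriv F u x)) (dot b (Defs.deriv F u 0)); f2.
by case: (u \in Rad b); rewrite ?mulr0 ?mulr1 // mulrC.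
Qed.

Lemma deriv0 x : Defs.deriv F 0 x = 0.
Proof. by rewrite /Defs.deriv addr0; move: (F x) => *; vf2. Qed.

Lemma Rad0 b : 0 \in Rad b.
Proof. by rewrite inE; apply/forallP => x; rewrite !deriv0. Qed.

Lemma RadP b u x : u \in Rad b -> dot b (Defs.deriv F u x) = dot b (Defs.deriv F u 0).
Proof. by rewrite inE => /forallP /(_ x) /eqP. Qed.

Lemma rad_derivD b u v x : u \in Rad b -> v \in Rad b ->
  dot b (Defs.deriv F (u + v) x) = dot b (Defs.deriv F u 0) + dot b (Defs.deriv F v 0).
Proof.
move=> uR vR.
have -> : Defs.deriv F (u + v) x = Defs.deriv F u x + Defs.deriv F v (x + u).
  by rewrite /Defs.deriv addrA; move: (F x) (F (x + u)) (F (x + u + v)) => *; vf2.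
by rewrite dotDr (RadP _ _ _ uR) (RadP _ _ _ vR).
Qed.

Lemma RadD b u v : u \in Rad b -> v \in Rad b -> u + v \in Rad b.
Proof.
move=> uR vR; rewrite inE; apply/forallP => x.
by rewrite !rad_derivD.
Qed.

Lemma card_Rad b : #|Rad b| = (2 ^ dimS (Rad b))%N.
Proof. exact: card_subspace (Rad0 b) (@RadD b). Qed.

Lemma walsh_sq2 b a : walsh F b a ^+ 2 =
  if [forall u in Rad b, dot b (Defs.deriv F u 0) + dot u a == 0]
  then ((2 ^ (n + dimS (Rad b)))%N)%:Z else 0.
Proof.
rewrite walsh_sq sum_sgn_sub.
- by case: ifP; rewrite ?mulr0 // card_Rad -PoszM expnD.
- exact: RadD.
move=> u v uR vR; rewrite rad_derivD // dotDl.
by move: (dot b (Defs.deriv F u 0)) (dot b (Defs.deriv F v 0)) (dot u a) (dot v a); f2.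
Qed.

Lemma dot_all0 u : [forall a, dot u a == 0] = (u == 0).
Proof.
apply/forallP/eqP => [H | ->]; last by move=> a; rewrite dot0l.
by apply: dot_eq0 => a; rewrite dotC; apply/eqP.
Qed.

Lemma parseval b : \sum_(a : vec n) walsh F b a ^+ 2 = ((2 ^ n * 2 ^ n)%N)%:Z.
Proof.
under eq_bigr do rewrite walsh_sq.
rewrite -mulr_sumr exchange_big /=.
rewrite (bigD1 0) ?Rad0 //= [X in _ + X]big1 ?addr0 => [|u /andP [_ un0]].
  rewrite (eq_bigr (fun a => sgn (dot b (Defs.deriv F 0 0)) * sgn (dot 0 a))) => [|a _]; last by rewrite sgnD.
  rewrite -mulr_sumr sum_sgn_all => [|y z]; last by rewrite dotDr.
  by rewrite dot_all0 eqxx deriv0 dot0r mul1r PoszM.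
rewrite (eq_bigr (fun a => sgn (dot b (Defs.deriv F u 0)) * sgn (dot u a))) => [|a _]; last by rewrite sgnD.
rewrite -mulr_sumr sum_sgn_all => [|y z]; last by rewrite dotDr.
by rewrite dot_all0 (negbTE un0) mulr0.
Qed.

Lemma walsh_exists b : exists a, walsh F b a != 0.
Proof.
apply/existsP; apply: contraT => /existsPn H.
have := parseval b; rewrite big1 => [|a _]; last by rewrite (eqP (negPn (H a))) expr2 mulr0.
by move=> [] /esym /eqP; rewrite muln_eq0 expn_eq0.
Qed.

Lemma amp_Rad b : has_amplitude F b (dimS (Rad b)).
Proof.
apply/andP; split.
  apply/forallP => a; have := walsh_sq2 b a; rewrite PoszX2.
  by case: ifP => _ e; [rewrite e eqxx orbT | rewrite -sqrf_eq0 e eqxx].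
have [a Wa] := walsh_exists b; apply/existsP; exists a.
move: (walsh_sq2 b a); rewrite PoszX2; case: ifP => _ e; first by rewrite e.
by move: Wa; rewrite -sqrf_eq0 e eqxx.
Qed.

Lemma amp_uniq b k1 k2 : has_amplitude F b k1 -> has_amplitude F b k2 -> k1 = k2.
Proof.
case/andP => _ /existsP [a /eqP e1] /andP [/forallP /(_ a) H _].
move: H; rewrite e1 -!PoszX2; case/orP => [|/eqP [] /eqP].
  by move/eqP => h; move: e1; rewrite h expr2 mulr0 => /eqP; rewrite eq_sym expf_eq0 => /andP [_ /eqP].
by rewrite eqn_exp2l // eqn_add2l => /eqP.
Qed.

Lemma Hbbar_C b : Hbbar b = ~: Hb b.
Proof. by apply/setP => x; rewrite !inE; case: (F2cases (dot b x)) => ->. Qed.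

Lemma card_Hb b : b != 0 -> (2 * #|Hb b|)%N = (2 ^ n)%N.
Proof.
move=> bn0; have [e be] := dot_neq0 _ bn0.
have : #|Hbbar b| = #|Hb b|.
  have -> : Hbbar b = [set x + e | x in Hb b].
    apply/setP => x; rewrite !inE; apply/idP/imsetP => [h|[y]].
      exists (x + e); last by rewrite vaddK.
      by rewrite inE dotDr be; move: h => /eqP ->.
    by rewrite inE => /eqP h ->; rewrite dotDr h be add0r.
  by rewrite card_imset //; apply: addIr.
by rewrite Hbbar_C => E; rewrite -card_vec -(cardsC (Hb b)) E mul2n addnn.
Qed.

Lemma card_Hbbar b : b != 0 -> (2 * #|Hbbar b|)%N = (2 ^ n)%N.
Proof.
move=> bn0; have := card_Hb _ bn0; rewrite Hbbar_C -card_vec -(cardsC (Hb b)).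
by rewrite !mul2n -!addnn => /eqP; rewrite eqn_add2l => /eqP <-.
Qed.

Lemma Lm0 a : Lm a 0 = 0.
Proof. by rewrite /Lm; move: (Defs.deriv F a 0) => *; vf2. Qed.

Lemma Lm_sum a (I : finType) (G : I -> vec n) : Lm a (\sum_i G i) = \sum_i Lm a (G i).
Proof. exact: (big_morph _ (Lm_add a) (Lm0 a)). Qed.

Lemma Lm_scale a (c : 'F_2) y : Lm a (c *: y) = c *: Lm a y.
Proof. by case: (F2cases c) => ->; rewrite ?scale0r ?Lm0 ?scale1r. Qed.

Lemma exists_b x : x != 0 -> exists2 b, b != 0 & x \in Rad b.
Proof.
move=> xn0.
pose M := \matrix_(i < n, j < n) Lm x (delta_mx 0 i) 0 j.
have LM y : Lm x y = y *m M.
  rewrite {1}(row_sum_delta y) Lm_sum mulmx_sum_row; apply: eq_bigr => i _.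
  by rewrite Lm_scale; congr (_ *: _); apply/rowP => j; rewrite !mxE.
have xM : x *m M = 0.
  rewrite -LM /Lm /Defs.deriv add0r.
  have -> : x + x = 0 by move: x {xn0 M LM} => *; vf2.
  by move: (F x) (F 0) => *; vf2.
have /det0P [v vn0 vM] : \det M^T == 0.
  by rewrite det_tr; apply/det0P; exists x.
exists v => //; rewrite inE; apply/forallP => y; apply/eqP.
have -> : Defs.deriv F x y = Lm x y + Defs.deriv F x 0.
  by rewrite /Lm; move: (Defs.deriv F x y) (Defs.deriv F x 0) => *; vf2.
rewrite dotDr LM dot_mx -mulmxA.
have -> : M *m v^T = (v *m M^T)^T by rewrite trmx_mul trmxK.
by rewrite vM trmx0 mulmx0 mxE add0r.
Qed.

Hypothesis Fapn : APN F.

Lemma card_imD a : a != 0 -> (2 * #|imD F a|)%N = (2 ^ n)%N.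
Proof.
move=> an0; transitivity (\sum_(x : vec n) 1)%N; last by rewrite sum1_card card_vec.
rewrite [RHS](partition_big (Defs.deriv F a) (mem (imD F a))) => [|x _]; last by apply: imset_f.
rewrite mulnC -sum_nat_const; apply: eq_bigr => y /imsetP [x0 _ ->].
rewrite sum1_card.
have -> : #|[pred x | true && (Defs.deriv F a x == Defs.deriv F a x0)]| =
          #|[set x | (F x + F (x + a))%R == Defs.deriv F a x0]|.
  by apply: eq_card => x; rewrite !inE.
apply/eqP; rewrite eqn_leq Fapn // andbT.
have sub : [set x0; x0 + a] \subset [set x | (F x + F (x + a))%R == Defs.deriv F a x0].
  apply/subsetP => x; rewrite !inE => /orP [] /eqP ->; first by [].
  by rewrite /Defs.deriv vaddK addrC.
apply: leq_trans (subset_leq_card sub).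
rewrite cards2 ltnS lt0b; apply: contra an0 => /eqP e.
by rewrite -(addKr x0 a) -e addrC subrr.
Qed.

Lemma memD a x : Defs.deriv F a x \in imD F a.
Proof. by apply: imset_f. Qed.

Lemma Vb_Rad b : b != 0 -> Vb F b = Rad b.
Proof.
move=> bn0; apply/setP => a; rewrite /Vb /Tb /Tbbar !inE.
have [->|an0] := eqVneq a 0.
  by rewrite orbT /=; apply/esym/forallP => x; rewrite !deriv0.
rewrite orbF; apply/idP/idP.
  case/orP => /eqP e; apply/forallP => x.
    by have := memD a x; have := memD a 0; rewrite e !inE => /eqP -> /eqP ->.
  by have := memD a x; have := memD a 0; rewrite e !inE => /eqP -> /eqP ->.
move=> H; have {}H : a \in Rad b by rewrite inE.
have sub : forall S : {set vec n}, (2 * #|S|)%N = (2 ^ n)%N ->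
  (forall x, Defs.deriv F a x \in S) -> imD F a == S.
  move=> S cS hS; rewrite eqEcard; apply/andP; split.
    by apply/subsetP => y /imsetP [x _ ->].
  by rewrite -(leq_pmul2l (isT : (0 < 2)%N)) cS card_imD.
case: (F2cases (dot b (Defs.deriv F a 0))) => e.
  rewrite sub //; first exact: card_Hb.
  by move=> x; rewrite inE (RadP _ _ _ H) e.
rewrite (sub (Hbbar b)) ?orbT //; first exact: card_Hbbar.
by move=> x; rewrite inE (RadP _ _ _ H) e.
Qed.

Lemma dimS0 : dimS [set (0 : vec n)] = 0%N.
Proof. by rewrite /dimS enum_set1 span_seq1 dim_vline eqxx. Qed.

Lemma Rad_nz b : (1 <= dimS (Rad b))%N -> exists2 x, x \in Rad b & x != 0.
Proof.
move=> d1; have : (1 < #|Rad b|)%N by rewrite card_Rad -{1}(expn0 2) ltn_exp2l.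
case/card_gt1P => x [y [xR yR xy]].
have [x0|xn0] := eqVneq x 0; last by exists x.
by exists y => //; rewrite -x0 eq_sym.
Qed.

Lemma Rad_dim_pos b x : x != 0 -> x \in Rad b -> (1 <= dimS (Rad b))%N.
Proof.
move=> xn0 xR; rewrite lt0n; apply/negP => /eqP d0.
have := card_Rad b; rewrite d0 expn0 => c1.
have : (#|[set (0 : vec n)%R; x]| <= #|Rad b|)%N.
  by apply: subset_leq_card; apply/subsetP => y; rewrite in_set2 => /orP [] /eqP ->; [exact: Rad0 | exact: xR].
by rewrite c1 cards2 eq_sym xn0.
Qed.

Lemma dot_ext b b' t : (forall y, (dot b y == t) = (dot b' y == t)) -> b = b'.
Proof.
move=> H; apply/rowP => i; have := H (delta_mx 0 i).
rewrite dotC dot_delta dotC dot_delta.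
move: (b 0 i) (b' 0 i) t {H} => p q r; case: (F2cases p) => ->; case: (F2cases q) => ->; case: (F2cases r) => -> //; move/eqP; rewrite eqbF_neg; try exact: val_inj. all: by [].
Qed.

Lemma Vb_pt b b' x : x != 0 -> x \in Vb F b -> x \in Vb F b' -> b = b'.
Proof.
move=> xn0; rewrite /Vb /Tb /Tbbar !inE (negbTE xn0) !orbF.
move=> /orP [] /eqP e1 /orP [] /eqP e2; have e := etrans (esym e1) e2.
- by apply: (dot_ext _ _ 0) => y; have := congr1 (fun S : {set vec n} => y \in S) e; rewrite /Hb !inE.
- by have := congr1 (fun S : {set vec n} => (0 : vec n) \in S) e; rewrite /Hb /Hbbar !inE !dot0r.
- by have := congr1 (fun S : {set vec n} => (0 : vec n) \in S) e; rewrite /Hb /Hbbar !inE !dot0r.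
- by apply: (dot_ext _ _ 1) => y; have := congr1 (fun S : {set vec n} => y \in S) e; rewrite /Hbbar !inE.
Qed.

Lemma main_sec :
  (forall b : vec n, b != 0 -> has_amplitude F b (dimS (Vb F b))) /\
  ((forall (b : vec n) (k : nat), b != 0 -> has_amplitude F b k -> ~~ odd k) ->
   vs_partition (VF F) /\
   (forall d : nat, (1 <= d)%N ->
      #|[set U in VF F | dimS U == d]| =
      #|[set b : vec n | (b != 0) && has_amplitude F b d]|)).
Proof.
split; first by move=> b bn0; rewrite Vb_Rad //; exact: amp_Rad.
move=> _; split.
  split.
    move=> U /imsetP [b]; rewrite inE => /andP [bn0 d1] ->.
    rewrite Vb_Rad // in d1 *; split; first by split; [exact: Rad0 | exact: RadD].
    by apply: contraTneq d1 => ->; rewrite dimS0.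
  move=> x xn0; have [b bn0 xR] := exists_b _ xn0.
  exists (Vb F b); split.
    split; last by rewrite Vb_Rad.
    apply/imsetP; exists b => //; rewrite inE bn0 /= Vb_Rad //.
    exact: Rad_dim_pos xR.
  move=> U' [/imsetP [b']]; rewrite inE => /andP [b'n0 _] -> xU'.
  by congr (Vb F _); apply: (Vb_pt _ _ _ xn0) xU'; rewrite Vb_Rad.
move=> d d1.
have E1 : [set U in VF F | dimS U == d] = Vb F @: [set b | (b != 0) && (dimS (Vb F b) == d)].
  apply/setP => U; rewrite !inE; apply/andP/imsetP => [[/imsetP [b]] | [b]].
    by rewrite inE => /andP [bn0 _] -> dU; exists b => //; rewrite inE bn0.
  rewrite inE => /andP [bn0 /eqP db] ->; split; last by rewrite db.
  by apply/imsetP; exists b => //; rewrite inE bn0 db.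
have E2 : [set b | (b != 0) && has_amplitude F b d] = [set b | (b != 0) && (dimS (Vb F b) == d)].
  apply/setP => b; rewrite !inE; case bn0: (b != 0) => //=.
  apply/idP/eqP => [h|<-]; last by rewrite Vb_Rad //; exact: amp_Rad.
  by apply: (amp_uniq b) h; rewrite Vb_Rad //; exact: amp_Rad.
rewrite E1 E2 card_in_imset // => b b'; rewrite !inE => /andP [bn0 /eqP db] /andP [b'n0 _] e.
have [x xR xn0] : exists2 x, x \in Rad b & x != 0 by apply: Rad_nz; rewrite -Vb_Rad // db.
by apply: (Vb_pt _ _ _ xn0); rewrite -?e Vb_Rad.
Qed.
End S.

Theorem mainTheorem2 (n : nat) (F : 'rV['F_2]_n -> 'rV['F_2]_n) :
  ~~ odd n -> quadratic F -> APN F ->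
  (forall b : 'rV['F_2]_n, b != 0 -> has_amplitude F b (dimS (Vb F b))) /\
  ((forall (b : 'rV['F_2]_n) (k : nat), b != 0 -> has_amplitude F b k -> ~~ odd k) ->
   vs_partition (VF F) /\
   (forall d : nat, (1 <= d)%N ->
      #|[set U in VF F | dimS U == d]| =
      #|[set b : 'rV['F_2]_n | (b != 0) && has_amplitude F b d]|)).
Proof. by move=> _ Fq Fapn; exact: main_sec. Qed.
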